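(* The Thue–Morse word $t$ is uniformly abelian-square rich.
   Context: The Thue–Morse word $t=0110100110010110\cdots$ is the fixed point starting with $0$ of the substitution $\mu:0\mapsto 01,\ 1\mapsto 10$. An abelian square is a word $v_1v_2$ where $v_1$ and $v_2$ have the same number of occurrences of each letter. An infinite word $w$ is uniformly abelian-square rich if there is a constant $C>0$ such that for all sufficiently large $n$, every factor of $w$ of length $n$ has at least $Cn^2$ distinct factors that are abelian squares. *)

(* Defs.v *)
From mathcomp Require Import all_boot all_order all_algebra.
Set Implicit Arguments. Unset Strict Implicit. Unset Printing Implicit Defensive.
Import Order.TTheory GRing.Theory Num.Theory.

(* Words over the binary alphabet {0,1}, encoded as bool (false = 0, true = 1). *)

Definition tm_mu (w : seq bool) : seq bool := flatten [seq [:: b; ~~ b] | b <- w].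

Definition tm_prefix (k : nat) : seq bool := iter k tm_mu [:: false].

(* The Thue--Morse word t : nat -> letter; the n-th letter is read from
   mu^(n+1)(0), which has length 2^(n+1) > n. *)
Definition thue_morse (n : nat) : bool := nth false (tm_prefix n.+1) n.

Definition ifactor (w : nat -> bool) (i n : nat) : seq bool := mkseq (fun j => w (i + j)) n.

Definition factors (u : seq bool) : seq (seq bool) :=
  [seq take l (drop i u) | i <- iota 0 (size u).+1, l <- iota 0 (size u - i).+1].

(* An abelian square: v = v1 v2 where v1 and v2 have the same number of
   occurrences of each letter (this forces |v1| = |v2|, so the split is the midpoint). *)
Definition abelian_square (v : seq bool) : bool :=
  has (fun i => all (fun a : bool => count_mem a (take i v) == count_mem a (drop i v))
                    [:: false; true])
      (iota 0 (size v).+1).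

Definition num_abelian_square_factors (u : seq bool) : nat :=
  size (undup [seq v <- factors u | abelian_square v]).

Definition uniformly_abelian_square_rich (w : nat -> bool) : Prop :=
  exists C : rat, (0 < C)%R /\
    exists n0 : nat, forall n : nat, (n0 <= n)%N -> forall i : nat,
      (C * (n%:R ^+ 2) <= (num_abelian_square_factors (ifactor w i n))%:R)%R.

(* Main.v *)
Require Import Defs.
From mathcomp Require Import all_boot all_order all_algebra.
From mathcomp Require Import zify.
Set Implicit Arguments. Unset Strict Implicit. Unset Printing Implicit Defensive.
Import Order.TTheory GRing.Theory Num.Theory.

Lemma tm_mu_cons b w : tm_mu (b :: w) = b :: ~~ b :: tm_mu w.
Proof. by []. Qed.

Lemma size_tm_mu w : size (tm_mu w) = 2 * size w.
Proof. elim: w => [|b w IH] //; rewrite tm_mu_cons /= IH; lia. Qed.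

Lemma nth_mu_even w n : nth false (tm_mu w) (2 * n) = nth false w n.
Proof.
elim: w n => [|b w IH] [|n] //.
have -> : 2 * n.+1 = (2 * n).+2 by lia. by rewrite tm_mu_cons /= IH.
Qed.

Lemma nth_mu_odd w n : n < size w -> nth false (tm_mu w) (2 * n).+1 = ~~ nth false w n.
Proof.
elim: w n => [|b w IH] [|n] // Hn.
have -> : (2 * n.+1).+1 = (2 * n).+3 by lia. by rewrite tm_mu_cons /= IH.
Qed.

Lemma prefixS k : tm_prefix k.+1 = tm_mu (tm_prefix k).
Proof. by []. Qed.

Lemma size_prefix k : size (tm_prefix k) = 2 ^ k.
Proof. elim: k => [|k IH] //; by rewrite prefixS size_tm_mu IH expnS. Qed.

Lemma prefix_step k n : n < 2 ^ k -> nth false (tm_prefix k.+1) n = nth false (tm_prefix k) n.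
Proof.
elim: k n => [|k IH] n Hn.
  by have -> : n = 0 by rewrite expn0 in Hn; lia.
have [a [Ha | Ha]] : exists a, n = 2 * a \/ n = (2 * a).+1.
  exists (n %/ 2); have := divn_eq n 2; have : n %% 2 < 2 by apply: ltn_pmod. lia.
- subst n; rewrite prefixS nth_mu_even [in RHS]prefixS nth_mu_even IH //.
  rewrite expnS in Hn. lia.
- subst n; rewrite expnS in Hn.
  rewrite prefixS nth_mu_odd ?[in RHS]prefixS ?nth_mu_odd ?IH ?size_prefix ?size_tm_mu ?size_prefix //; rewrite ?expnS; lia.
Qed.

Lemma prefix_mono k k' n : k <= k' -> n < 2 ^ k -> nth false (tm_prefix k') n = nth false (tm_prefix k) n.
Proof.
move=> Hk Hn; rewrite -(subnKC Hk); elim: (k' - k) => [|m IH]; first by rewrite addn0.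
rewrite addnS prefix_step ?IH //.
apply: (leq_trans Hn); rewrite leq_exp2l //; lia.
Qed.

Lemma ltn_2exp n : n < 2 ^ n.
Proof. elim: n => [|n IH] //; rewrite expnS; lia. Qed.

Lemma prefix_eq k k' n : n < 2 ^ k -> n < 2 ^ k' ->
  nth false (tm_prefix k) n = nth false (tm_prefix k') n.
Proof.
move=> H1 H2; rewrite -(@prefix_mono k (k + k')) // ?(@prefix_mono k' (k + k')) //; lia.
Qed.

Lemma ltn_2exp2 n : n < 2 ^ (2 * n).
Proof. apply: (leq_trans (ltn_2exp n)); rewrite leq_exp2l //; lia. Qed.

Lemma tm_even n : thue_morse (2 * n) = thue_morse n.
Proof.
rewrite /thue_morse prefixS nth_mu_even (@prefix_eq _ n.+1) //.
- exact: ltn_2exp2.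
- apply: (leq_trans (ltn_2exp n)); rewrite leq_exp2l //.
Qed.

Lemma tm_odd n : thue_morse (2 * n).+1 = ~~ thue_morse n.
Proof.
rewrite /thue_morse prefixS nth_mu_odd; last first.
  rewrite size_prefix; apply: (leq_trans (ltn_2exp n)); rewrite leq_exp2l //; lia.
rewrite (@prefix_eq _ n.+1) //.
- apply: (leq_trans (ltn_2exp n)); rewrite leq_exp2l //; lia.
- apply: (leq_trans (ltn_2exp n)); rewrite leq_exp2l //.
Qed.

Notation t := thue_morse.

Lemma half_up p : exists a, p <= 2 * a <= p + 1.
Proof. exists ((p + 1) %/ 2); have := divn_eq (p+1) 2; have : (p+1) %% 2 < 2 by apply: ltn_pmod. lia. Qed.

Lemma no_period d : 0 < d -> forall p L, 5 * d <= L ->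
  (forall j, j < L -> t (p + j) = t (p + j + d)) -> False.
Proof.
elim: d {-2}d (leqnn d) => [|D IH] d Hd Hd0 p L HL H; first by lia.
have [a0 Ha0] := half_up p.
have [e [He | He]] : exists e, d = 2 * e \/ d = (2 * e).+1.
  exists (d %/ 2); have := divn_eq d 2; have : d %% 2 < 2 by apply: ltn_pmod. lia.
- apply: (IH e _ _ a0 (5 * e)) => //; try lia.
  move=> j Hj.
  have := H (2 * a0 + 2 * j - p) ltac:(lia).
  have -> : p + (2 * a0 + 2 * j - p) = 2 * (a0 + j) by lia.
  have -> : 2 * (a0 + j) + d = 2 * (a0 + j + e) by lia.
  by rewrite !tm_even.
- have key : forall a, p <= 2 * a -> 2 * a + 1 < p + L -> t (a + e) = t (a + e).+1.
    move=> a H1 H2.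
    have := H (2 * a - p) ltac:(lia).
    have -> : p + (2 * a - p) = 2 * a by lia.
    have -> : 2 * a + d = (2 * (a + e)).+1 by lia.
    have := H (2 * a + 1 - p) ltac:(lia).
    have -> : p + (2 * a + 1 - p) = (2 * a).+1 by lia.
    have -> : (2 * a).+1 + d = 2 * (a + e).+1 by lia.
    rewrite !tm_even !tm_odd => <- ->; by rewrite negbK.
  have [b [Hb | Hb]] : exists b, a0 + e = 2 * b \/ a0 + e + 1 = 2 * b.
    exists ((a0 + e + 1) %/ 2); have := divn_eq (a0+e+1) 2; have : (a0+e+1) %% 2 < 2 by apply: ltn_pmod. lia.
  + have K1 : p <= 2 * a0 by lia.
    have K2 : 2 * a0 + 1 < p + L by lia.
    have := key a0 K1 K2.
    rewrite Hb tm_even tm_odd; by case: (t b).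
  + have K1 : p <= 2 * a0.+1 by lia.
    have K2 : 2 * a0.+1 + 1 < p + L by lia.
    have := key a0.+1 K1 K2.
    have -> : a0.+1 + e = 2 * b by lia.
    rewrite tm_even tm_odd; by case: (t b).
Qed.

Lemma ifactorE (w : nat -> bool) i n : ifactor w i n = map w (iota i n).
Proof.
rewrite /ifactor /mkseq.
have -> : iota i n = map (addn i) (iota 0 n) by rewrite -iotaDl addn0.
by rewrite -map_comp.
Qed.

Lemma factor_in (w : nat -> bool) i n s l : s + l <= n ->
  map w (iota (i + s) l) \in factors (map w (iota i n)).
Proof.
move=> Hsl.
have -> : map w (iota (i + s) l) = take l (drop s (map w (iota i n))).
  rewrite -map_drop -map_take drop_iota take_iota.
  by have -> : minn l (n - s) = l by lia.
rewrite /factors; apply/allpairsPdep; exists s, l; rewrite !size_map !size_iota !mem_iota; split => //; lia.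
Qed.

Lemma count_tm a b :
  count_mem true (map t (iota (2 * a) (2 * b))) = b /\
  count_mem false (map t (iota (2 * a) (2 * b))) = b.
Proof.
elim: b => [|b [IH1 IH2]]; first by rewrite muln0.
have -> : 2 * b.+1 = 2 * b + 2 by lia.
rewrite iotaD map_cat !count_cat IH1 IH2.
have -> : 2 * a + 2 * b = 2 * (a + b) by lia.
rewrite /= tm_even tm_odd; case: (t (a + b)) => /=; lia.
Qed.

Lemma abel a b : abelian_square (map t (iota (2 * a) (2 * (2 * b)))).
Proof.
apply/hasP; exists (2 * b); first by rewrite mem_iota size_map size_iota; lia.
rewrite -map_take -map_drop take_iota drop_iota.
have -> : minn (2 * b) (2 * (2 * b)) = 2 * b by lia.
have -> : 2 * (2 * b) - 2 * b = 2 * b by lia.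
have -> : 2 * a + 2 * b = 2 * (a + b) by lia.
have [h1 h2] := count_tm a b; have [h3 h4] := count_tm (a + b) b.
by rewrite /= h1 h2 h3 h4 !eqxx.
Qed.
Lemma map_eq_nth p p' L : map t (iota p L) = map t (iota p' L) ->
  forall x, x < L -> t (p + x) = t (p' + x).
Proof.
move=> E x Hx; have := congr1 (fun s => nth false s x) E.
by rewrite /= !(nth_map 0) ?size_iota // !nth_iota.
Qed.

Lemma shift_distinct p p' L : p < p' -> 5 * (p' - p) <= L ->
  map t (iota p L) <> map t (iota p' L).
Proof.
move=> Hp HL E; apply: (@no_period (p' - p) _ p L HL); first lia.
move=> j Hj; rewrite (map_eq_nth E Hj); congr t; lia.
Qed.

Lemma count_bound n i : 42 <= n ->
  (n ^ 2 <= 80 * 100 * num_abelian_square_factors (ifactor t i n))%N.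
Proof.
move=> Hn.
set K := n %/ 42.
have HK : 1 <= K /\ n < 84 * K.
  have := divn_eq n 42; have : n %% 42 < 42 by apply: ltn_pmod. rewrite -/K; lia.
have [a Ha] : exists a, i + i %% 2 = 2 * a.
  exists ((i + 1) %/ 2); have := divn_eq i 2; have : i %% 2 < 2 by apply: ltn_pmod.
  have := divn_eq (i + 1) 2; have : (i + 1) %% 2 < 2 by apply: ltn_pmod. lia.
set S := [seq map t (iota (2 * a + 2 * j) (20 * m)) | m <- iota K K, j <- iota 0 K].
have Hsize : size S = K * K by rewrite size_allpairs !size_iota.
have Huniq : uniq S.
  apply: allpairs_uniq; try apply: iota_uniq.
  move=> [m j] [m' j'] /allpairsP [[x y] [hx hy [-> ->]]] /allpairsP [[x' y'] [hx' hy' [-> ->]]] /= E.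
  move: hx hy hx' hy'; rewrite !mem_iota /= => hx hy hx' hy'.
  have Hs := congr1 size E; rewrite !size_map !size_iota in Hs.
  have Ex : x = x' by lia.
  subst x'; case: (ltngtP y y') => Hyy.
  - exfalso; apply: (shift_distinct _ _ E); lia.
  - exfalso; apply: (shift_distinct _ _ (esym E)); lia.
  - by rewrite Hyy.
have Hsub : {subset S <= undup [seq v <- factors (ifactor t i n) | abelian_square v]}.
  move=> v /allpairsP [[m j] [hm hj ->]].
  rewrite mem_iota in hm; rewrite mem_iota in hj; simpl in hm, hj.
  rewrite -[(m, j).1]/m -[(m, j).2]/j.
  rewrite mem_undup mem_filter; apply/andP; split.
  - have -> : 2 * a + 2 * j = 2 * (a + j) by lia.
    have -> : 20 * m = 2 * (2 * (5 * m)) by lia.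
    exact: abel.
  - rewrite ifactorE.
    have -> : 2 * a + 2 * j = i + (i %% 2 + 2 * j) by lia.
    apply: factor_in.
    have : i %% 2 < 2 by apply: ltn_pmod. lia.
have := uniq_leq_size Huniq Hsub; rewrite Hsize -/(num_abelian_square_factors _).
move: HK; set N := num_abelian_square_factors _; nia.
Qed.

Lemma rat_step (c n N : nat) : (0 < c)%N -> (n ^ 2 <= c * N)%N ->
  ((c%:R)^-1 * n%:R ^+ 2 <= N%:R :> rat)%R.
Proof.
move=> c0 H.
have cpos : (0 < c%:R :> rat)%R by rewrite ltr0n.
rewrite -(@ler_pM2l _ c%:R) // mulrA mulfV ?mul1r; last by rewrite gt_eqF.
by rewrite -natrX -natrM ler_nat.
Qed.
Theorem proposition2 : uniformly_abelian_square_rich thue_morse.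
Proof.
pose c : nat := 80 * 100.
have c0 : (0 < c)%N by rewrite /c muln_gt0.
exists (c%:R)^-1%R; split; first by rewrite invr_gt0 ltr0n.
exists 42 => n Hn i.
have H := count_bound i Hn; rewrite -/c in H.
move: H; generalize (num_abelian_square_factors (ifactor t i n)) => N H.
clearbody c.
exact: rat_step.
Qed.
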